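(* Let $\mu\in(0,\tfrac12]$ and consider the spatial circular restricted three-body problem in the rotating frame, with primaries fixed at $(-\mu,0,0)$ and $(1-\mu,0,0)$. Let $(x_{eq},0,0)$ be any of the three collinear Lagrange points $L_1,L_2,L_3$, and set $$c:=\frac{1-\mu}{|x_{eq}+\mu|^3}+\frac{\mu}{|x_{eq}-1+\mu|^3}.$$ Define the vertical frequency $\omega_v:=\sqrt{c}$ and the planar frequency $$\omega_p:=\Big(\beta_1+\sqrt{\beta_1^2+\beta_2}\Big)^{1/2},\qquad \beta_1=2-\tfrac12\big(U_{xx}^{eq}+U_{yy}^{eq}\big),\quad \beta_2=-U_{xx}^{eq}U_{yy}^{eq},$$ where $U_{xx}^{eq}=2c+1$, $U_{yy}^{eq}=1-c$ (so that the linearized flow at the Lagrange point has eigenvalues $\pm\lambda$ real, $\pm i\omega_p$, $\pm i\omega_v$). Then $$\omega_v<\omega_p<2\omega_v.$$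
   Context: The equations of motion of the spatial circular restricted three-body problem are $\ddot x=2\dot y+x-(1-\mu)\frac{x+\mu}{r_1^3}-\mu\frac{x-1+\mu}{r_2^3}$, $\ddot y=-2\dot x+y-\big(\frac{1-\mu}{r_1^3}+\frac{\mu}{r_2^3}\big)y$, $\ddot z=-\big(\frac{1-\mu}{r_1^3}+\frac{\mu}{r_2^3}\big)z$, with $r_1=((x+\mu)^2+y^2+z^2)^{1/2}$, $r_2=((x-1+\mu)^2+y^2+z^2)^{1/2}$. The collinear Lagrange points are the equilibria on the $x$-axis. With $U(x,y,z)=\tfrac12(x^2+y^2)+\frac{1-\mu}{r_1}+\frac{\mu}{r_2}$, the linearization at $(x_{eq},0,0)$ is $\ddot\xi-2\dot\eta=U^{eq}_{xx}\xi$, $\ddot\eta+2\dot\xi=U^{eq}_{yy}\eta$, $\ddot\zeta=U^{eq}_{zz}\zeta$, with $U^{eq}_{xx}=2c+1$, $U^{eq}_{yy}=1-c$, $U^{eq}_{zz}=-c$. *)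

(* Defs.v *)
From Stdlib Require Import Reals.
Open Scope R_scope.

Definition r1 (mu x y z : R) : R := sqrt ((x + mu)^2 + y^2 + z^2).
Definition r2 (mu x y z : R) : R := sqrt ((x - 1 + mu)^2 + y^2 + z^2).

Definition acc_x (mu x y z vx vy vz : R) : R :=
  2 * vy + x - (1 - mu) * (x + mu) / (r1 mu x y z)^3
             - mu * (x - 1 + mu) / (r2 mu x y z)^3.
Definition acc_y (mu x y z vx vy vz : R) : R :=
  - 2 * vx + y - ((1 - mu) / (r1 mu x y z)^3 + mu / (r2 mu x y z)^3) * y.
Definition acc_z (mu x y z vx vy vz : R) : R :=
  - ((1 - mu) / (r1 mu x y z)^3 + mu / (r2 mu x y z)^3) * z.

Definition is_equilibrium (mu x y z : R) : Prop :=
  r1 mu x y z <> 0 /\ r2 mu x y z <> 0 /\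
  acc_x mu x y z 0 0 0 = 0 /\ acc_y mu x y z 0 0 0 = 0 /\
  acc_z mu x y z 0 0 0 = 0.

Definition collinear_lagrange_point (mu xeq : R) : Prop :=
  is_equilibrium mu xeq 0 0.

Definition c_coef (mu xeq : R) : R :=
  (1 - mu) / (Rabs (xeq + mu))^3 + mu / (Rabs (xeq - 1 + mu))^3.

Definition Uxx_eq (mu xeq : R) : R := 2 * c_coef mu xeq + 1.
Definition Uyy_eq (mu xeq : R) : R := 1 - c_coef mu xeq.

Definition beta1 (mu xeq : R) : R := 2 - (Uxx_eq mu xeq + Uyy_eq mu xeq) / 2.
Definition beta2 (mu xeq : R) : R := - (Uxx_eq mu xeq * Uyy_eq mu xeq).

Definition omega_v (mu xeq : R) : R := sqrt (c_coef mu xeq).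
Definition omega_p (mu xeq : R) : R :=
  sqrt (beta1 mu xeq + sqrt ((beta1 mu xeq)^2 + beta2 mu xeq)).

(* Main.v *)
Require Import Defs.
From Stdlib Require Import Reals Lra Psatz.
Open Scope R_scope.

Lemma sqrt_sq_abs (t : R) : sqrt (t^2 + 0^2 + 0^2) = Rabs t.
Proof. rewrite <- sqrt_Rsqr_abs. f_equal. unfold Rsqr. ring. Qed.

Lemma inv_cube_gt1 (B : R) : 0 < B < 1 -> 1 / B^3 > 1.
Proof.
  intros [H0 H1]. assert (0 < B^3) by (apply pow_lt; lra).
  assert (B^3 < 1) by (simpl; assert (B*B < 1) by nra; nra).
  apply Rlt_gt. unfold Rdiv. rewrite Rmult_1_l.
  rewrite <- Rinv_1 at 1. apply Rinv_lt_contravar; lra.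
Qed.

Lemma inv_cube_lt1 (B : R) : 1 < B -> 1 / B^3 < 1.
Proof.
  intros H1. assert (1 < B^3) by (simpl; assert (1 < B*B) by nra; nra).
  unfold Rdiv. rewrite Rmult_1_l.
  rewrite <- Rinv_1. apply Rinv_lt_contravar; lra.
Qed.

Lemma c_gt1 (mu x : R) : 0 < mu <= 1/2 -> collinear_lagrange_point mu x ->
  1 < c_coef mu x.
Proof.
  intros Hmu [H1 [H2 [Hx _]]].
  unfold acc_x, r1, r2 in *. unfold r1, r2 in H1, H2.
  rewrite !sqrt_sq_abs in *.
  unfold c_coef.
  set (a := x + mu) in *. set (b := x - 1 + mu) in *.
  assert (Hab : a - b = 1) by (unfold a, b; ring).
  assert (Hxa : x = (1 - mu) * a + mu * b) by (unfold a, b; ring).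
  set (u := 1 / Rabs a ^ 3). set (v := 1 / Rabs b ^ 3).
  assert (Eq : (1 - mu) * a * (u - 1) + mu * b * (v - 1) = 0).
  { unfold u, v. rewrite Hxa in Hx at 1. unfold Rdiv in *. lra. }
  assert (Key : a * ((1 - mu) * u + mu * v - 1) = mu * (v - 1)) by nra.
  replace ((1 - mu) / Rabs a ^ 3 + mu / Rabs b ^ 3) with ((1 - mu) * u + mu * v)
    by (unfold u, v, Rdiv; ring).
  destruct (Rtotal_order a 0) as [Ha | [Ha | Ha]].
  -
    assert (Hv : v < 1) by (unfold v; apply inv_cube_lt1;
      rewrite Rabs_left by lra; lra).
    nra.
  - exfalso. apply H1. rewrite Ha. apply Rabs_R0.
  - destruct (Rtotal_order a 1) as [Ha1 | [Ha1 | Ha1]].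
    + assert (Hv : v > 1) by (unfold v; apply inv_cube_gt1;
        rewrite Rabs_left by lra; lra).
      nra.
    + exfalso. apply H2. replace b with 0 by lra. apply Rabs_R0.
    + assert (Hu : u < 1) by (unfold u; apply inv_cube_lt1;
        rewrite Rabs_right by lra; lra).
      assert (Hv : v > 1).
      { destruct (Rtotal_order v 1) as [Hv | [Hv | Hv]]; try lra.
        - assert (b > 0) by lra.
          assert ((1-mu)*a > 0) by nra. assert (mu*b>0) by nra.
          assert ((1-mu)*a*(u-1) < 0) by nra. nra.
        - exfalso. rewrite Hv in Eq.
          assert ((1-mu)*a > 0) by nra.
          assert ((1-mu)*a*(u-1) < 0) by nra. nra. }
      nra.
Qed.

Theorem mainTheorem1 (mu xeq : R) :
  0 < mu <= 1/2 ->
  collinear_lagrange_point mu xeq ->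
  omega_v mu xeq < omega_p mu xeq < 2 * omega_v mu xeq.
Proof.
  intros Hmu Hc. pose proof (c_gt1 mu xeq Hmu Hc) as Hc1.
  unfold omega_v, omega_p, beta1, beta2, Uxx_eq, Uyy_eq.
  set (c := c_coef mu xeq) in *.
  replace ((2 - (2 * c + 1 + (1 - c)) / 2) ^ 2 + - ((2 * c + 1) * (1 - c)))
    with (9 * c^2 / 4 - 2 * c) by field.
  replace (2 - (2 * c + 1 + (1 - c)) / 2) with (1 - c / 2) by field.
  assert (HD : 0 <= 9 * c^2 / 4 - 2 * c) by nra.
  set (S := sqrt (9 * c^2 / 4 - 2 * c)).
  assert (HS0 : 0 <= S) by apply sqrt_pos.
  assert (HS2 : S * S = 9 * c^2 / 4 - 2 * c) by (apply sqrt_sqrt; exact HD).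
  assert (L1 : c < 1 - c / 2 + S) by nra.
  assert (L2 : 1 - c / 2 + S < 4 * c) by nra.
  split.
  - apply sqrt_lt_1_alt. lra.
  - replace (2 * sqrt c) with (sqrt (4 * c)).
    + apply sqrt_lt_1_alt. lra.
    + rewrite sqrt_mult by lra. replace 4 with (2 * 2) by ring.
      rewrite sqrt_square by lra. reflexivity.
Qed.
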